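(* Let $n\ge2$, $G=\langle a_1,\ldots,a_n\mid a_1^2\cdots a_n^2\rangle$, $p=a_1^2\cdots a_n^2$, and let $P$ be the free resolution $0\to P_2\xrightarrow{d_2}P_1\xrightarrow{d_1}P_0\xrightarrow{\varepsilon}\mathbb{Z}\to0$ of $\mathbb{Z}$ over $\mathbb{Z}G$ with $P_0=\mathbb{Z}G\,x$, $P_1$ free on $y_1,\ldots,y_n$, $P_2=\mathbb{Z}G\,w$, $\varepsilon(x)=1$, $d_1(y_i)=(a_i-1)x$, $d_2(w)=\sum_{i=1}^n\frac{\partial p}{\partial a_i}y_i$. Then there is a diagonal approximation $\Delta\colon P\to P\otimes P$ such that $\Delta_0(x)=x\otimes x$, $\Delta_1(y_i)=y_i\otimes a_ix+x\otimes y_i$, $\Delta_{02}(w)=x\otimes w$, and \begin{align*} \Delta_{11}(w)=\sum_{i=1}^n\Bigl[&\Bigl(\sum_{j=1}^{i-1}(a_1^2\cdots a_{j-1}^2)(1+a_j)y_j\otimes(a_1^2\cdots a_{i-1}^2)y_i\Bigr)\\ &+\Bigl(\sum_{j=1}^{i-1}(a_1^2\cdots a_{j-1}^2)(1+a_j)y_j\otimes(a_1^2\cdots a_{i-1}^2)a_iy_i\Bigr)\\ &+(a_1^2\cdots a_{i-1}^2)y_i\otimes(a_1^2\cdots a_{i-1}^2)a_iy_i\Bigr]. \end{align*}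
   Context: Fox derivatives: $\partial g_j/\partial g_i=\delta_{ij}$, $\partial(uv)/\partial g_i=\partial u/\partial g_i+u\,\partial v/\partial g_i$, then passed to $\mathbb{Z}G$. $P\otimes P$ has $(P\otimes P)_m=\bigoplus_{r+s=m}P_r\otimes_{\mathbb{Z}}P_s$ with diagonal $G$-action, differential $\partial(u\otimes v)=du\otimes v+(-1)^ru\otimes dv$ ($u\in P_r$) and augmentation $\varepsilon\otimes\varepsilon$. A diagonal approximation is a $\mathbb{Z}G$-chain map $\Delta\colon P\to P\otimes P$ with $(\varepsilon\otimes\varepsilon)\Delta_0=\varepsilon$; $\Delta_{rs}$ is $\Delta_{r+s}$ followed by projection onto $P_r\otimes P_s$. Empty products equal $1$ and empty sums $0$. *)

(* Defs.v *)
From HB Require Import structures.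
From mathcomp Require Import all_boot all_order.
From mathcomp Require Import ssralg ssrint.

Set Implicit Arguments.
Unset Strict Implicit.
Unset Printing Implicit Defensive.

Import GRing.Theory.
Local Open Scope ring_scope.

(* Words in the generators a_0..a_{n-1} (0-indexed; a_i of the paper is    *)
(* a (i-1) here).  A letter (i, false) is a_i, (i, true) is a_i^{-1}.       *)
Definition letter (n : nat) := ('I_n * bool)%type.
Definition word (n : nat) := seq (letter n).

Section Group.
Variables (G : groupType) (n : nat) (a : 'I_n -> G).

Definition eval_letter (l : letter n) : G :=
  if l.2 then inv (a l.1) else a l.1.

Definition eval_word (w : word n) : G :=
  foldr (fun l g => mul (eval_letter l) g) one w.

End Group.

Definition relator (n : nat) : word n :=
  flatten [seq [:: (i, false); (i, false)] | i <- enum 'I_n].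

Definition group_hom (G H : groupType) (f : G -> H) : Prop :=
  forall x y, f (mul x y) = mul (f x) (f y).

Definition is_presented (G : groupType) (n : nat) (a : 'I_n -> G)
    (r : word n) : Prop :=
  eval_word a r = one /\
  forall (H : groupType) (b : 'I_n -> H), eval_word b r = one ->
    exists f : G -> H,
      [/\ group_hom f, (forall i, f (a i) = b i) &
          forall f' : G -> H, group_hom f' -> (forall i, f' (a i) = b i) ->
            forall x, f' x = f x].

(* Free abelian groups as finite formal Z-linear combinations, compared     *)
(* coefficient-wise.                                                         *)
Definition fsum (K : Type) := seq (int * K).

Definition coef (K : eqType) (s : fsum K) (k : K) : int :=
  \sum_(p <- s) (if p.2 == k then p.1 else 0).

Definition feq (K : eqType) (s t : fsum K) : Prop :=
  forall k, coef s k = coef t k.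

Definition fscale (K : Type) (c : int) (s : fsum K) : fsum K :=
  [seq (c * p.1, p.2) | p <- s].

Definition ZG (G : groupType) := fsum G.

Definition zg_mul (G : groupType) (r s : ZG G) : ZG G :=
  [seq (p.1 * q.1, mul p.2 q.2) | p <- r, q <- s].

Definition zg_of (G : groupType) (g : G) : ZG G := [:: (1, g)].

Section Fox.
Variables (G : groupType) (n : nat) (a : 'I_n -> G) (i : 'I_n).

Definition fox_letter (l : letter n) : ZG G :=
  if l.1 == i then (if l.2 then [:: (-1, inv (a l.1))] else [:: (1, one)])
  else [::].

Fixpoint fox (w : word n) : ZG G :=
  match w with
  | [::] => [::]
  | l :: w' => fox_letter l ++ zg_mul (zg_of (eval_letter a l)) (fox w')
  end.
End Fox.

Inductive gen (n : nat) := GX | GY of 'I_n | GW.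
Arguments GX {n}. Arguments GW {n}.

Definition gen_enc n (e : gen n) : option (option 'I_n) :=
  match e with GX => None | GY i => Some (Some i) | GW => Some None end.
Definition gen_dec n (o : option (option 'I_n)) : gen n :=
  match o with None => GX | Some (Some i) => GY i | Some None => GW end.
Lemma gen_encK n : cancel (@gen_enc n) (@gen_dec n).
Proof. by case. Qed.
HB.instance Definition _ n := Equality.copy (gen n) (can_type (@gen_encK n)).

Definition gdeg n (e : gen n) : nat :=
  match e with GX => 0 | GY _ => 1 | GW => 2 end.

Section Resolution.
Variables (G : groupType) (n : nat) (a : 'I_n -> G).

(* Elements of P (all degrees): Z-combinations of g.e, g in G, e a generator;
   P_r is free over ZG on the generators of degree r. *)
Definition Pel := fsum (G * gen n).

Definition Pact (g : G) (s : Pel) : Pel := [seq (p.1, (mul g p.2.1, p.2.2)) | p <- s].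

Definition Pgen (r : ZG G) (e : gen n) : Pel := [seq (p.1, (p.2, e)) | p <- r].

Definition dgen (e : gen n) : Pel :=
  match e with
  | GX => [::]
  | GY i => [:: (1, (a i, GX)); (-1, (one, GX))]
  | GW => flatten [seq Pgen (fox a i (relator n)) (GY i) | i <- enum 'I_n]
  end.

Definition dP1 (u : G * gen n) : Pel := Pact u.1 (dgen u.2).

Definition dP (s : Pel) : Pel := flatten [seq fscale p.1 (dP1 p.2) | p <- s].

(* Elements of P (x) P: Z-combinations of (g.e) (x) (h.f); this is the free
   abelian group \bigoplus_{r,s} P_r (x)_Z P_s. *)
Definition Tel := fsum ((G * gen n) * (G * gen n)).

Definition Tact (g : G) (t : Tel) : Tel :=
  [seq (p.1, ((mul g p.2.1.1, p.2.1.2), (mul g p.2.2.1, p.2.2.2))) | p <- t].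

Definition Ttens (r : ZG G) (e : gen n) (s : ZG G) (f : gen n) : Tel :=
  [seq (p.1 * q.1, ((p.2, e), (q.2, f))) | p <- r, q <- s].

Definition dT1 (u v : G * gen n) : Tel :=
  [seq (q.1, (q.2, v)) | q <- dP1 u] ++
  [seq ((-1) ^+ gdeg u.2 * q.1, (u, q.2)) | q <- dP1 v].

Definition dT (t : Tel) : Tel := flatten [seq fscale p.1 (dT1 p.2.1 p.2.2) | p <- t].

Definition epsT (t : Tel) : int :=
  \sum_(p <- t | (p.2.1.2 == GX) && (p.2.2.2 == GX)) p.1.

Definition homog (m : nat) (t : Tel) : Prop :=
  forall k, coef t k != 0 -> gdeg k.1.2 + gdeg k.2.2 = m.

Definition proj (r s : nat) (t : Tel) : Tel :=
  [seq p <- t | (gdeg p.2.1.2 == r) && (gdeg p.2.2.2 == s)].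

(* A ZG-linear map P -> P (x) P, given by the images D e of the free
   generators, extended ZG-linearly (diagonal action on P (x) P). *)
Definition extend (D : gen n -> Tel) (s : Pel) : Tel :=
  flatten [seq fscale p.1 (Tact p.2.1 (D p.2.2)) | p <- s].

Definition diag_approx (D : gen n -> Tel) : Prop :=
  [/\ forall e, homog (gdeg e) (D e),
      forall e, feq (dT (D e)) (extend D (dgen e)) &
      epsT (D GX) = 1].

(* a_1^2 ... a_{j-1}^2 (paper's indexing), i.e. prod_{k < j} a_k^2 here *)
Definition pre (j : 'I_n) : G :=
  \big[mul/one]_(k < n | (k < j)%N) mul (a k) (a k).

Definition Delta11w : Tel :=
  flatten [seq
    flatten [seq Ttens [:: (1, pre j); (1, mul (pre j) (a j))] (GY j)
                       (zg_of (pre i)) (GY i) | j : 'I_n <- enum 'I_n & (j < i)%N]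
    ++ flatten [seq Ttens [:: (1, pre j); (1, mul (pre j) (a j))] (GY j)
                       (zg_of (mul (pre i) (a i))) (GY i) | j : 'I_n <- enum 'I_n & (j < i)%N]
    ++ Ttens (zg_of (pre i)) (GY i) (zg_of (mul (pre i) (a i))) (GY i)
  | i <- enum 'I_n].

End Resolution.

(* Main.v *)
Require Import Defs.
From HB Require Import structures.
From mathcomp Require Import all_boot all_order.
From mathcomp Require Import ssralg ssrint.
From mathcomp Require Import ring zify.
Set Implicit Arguments.
Unset Strict Implicit.
Unset Printing Implicit Defensive.
Import GRing.Theory.
Local Open Scope ring_scope.


Section Coef.
Variable K : eqType.
Definition ind (u k : K) : int := if u == k then 1 else 0.

Lemma coef_nil (k : K) : coef [::] k = 0.
Proof. by rewrite /coef big_nil. Qed.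
Lemma coef_cons (c : int) (u : K) s k : coef ((c,u) :: s) k = c * ind u k + coef s k.
Proof. by rewrite /coef big_cons /ind /=; case: (u == k); rewrite ?mulr1 ?mulr0. Qed.
Lemma coef_cat (s t : fsum K) k : coef (s ++ t) k = coef s k + coef t k.
Proof. by rewrite /coef big_cat. Qed.
Lemma coef_flatten (ss : seq (fsum K)) k : coef (flatten ss) k = \sum_(s <- ss) coef s k.
Proof. by elim: ss => [|s ss IH] /=; rewrite ?big_nil ?coef_nil // coef_cat IH big_cons. Qed.
Lemma coef_fscale c (s : fsum K) k : coef (fscale c s) k = c * coef s k.
Proof.
elim: s => [|[d u] s IH]; first by rewrite /fscale /= !coef_nil mulr0.
by rewrite /fscale /= !coef_cons -/(fscale c s) IH mulrDr mulrA.
Qed.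
Lemma coef_lin (I : Type) (F : I -> fsum K) (s : seq (int * I)) k :
  coef (flatten [seq fscale p.1 (F p.2) | p <- s]) k = \sum_(p <- s) p.1 * coef (F p.2) k.
Proof. by rewrite coef_flatten big_map; apply: eq_bigr => p _; rewrite coef_fscale. Qed.
Lemma coef_seq (s : fsum K) k : coef s k = \sum_(p <- s) p.1 * ind p.2 k.
Proof. by elim: s => [|[c u] s IH]; rewrite ?coef_nil ?big_nil // coef_cons big_cons IH. Qed.
End Coef.

Lemma ind_pair (K1 K2 : eqType) (u k1 : K1) (v k2 : K2) :
  ind (u, v) (k1, k2) = ind u k1 * ind v k2.
Proof. by rewrite /ind xpair_eqE; case: (u == k1); case: (v == k2); rewrite ?mulr1 ?mulr0. Qed.



Section Grp.
Variables (G : groupType) (n : nat) (a : 'I_n -> G).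

Lemma eval_cat (w1 w2 : word n) : eval_word a (w1 ++ w2) = mul (eval_word a w1) (eval_word a w2).
Proof. by elim: w1 => [|l w1 IH] /=; rewrite ?mul1g // IH mulgA. Qed.

Definition blk (i : 'I_n) : word n := [:: (i, false); (i, false)].

Lemma eval_blocks (s : seq 'I_n) :
  eval_word a (flatten (map blk s)) = \big[mul/one]_(k <- s) mul (a k) (a k).
Proof.
elim: s => [|k s IH]; first by rewrite big_nil.
by rewrite big_cons /= IH /eval_letter /= mulgA.
Qed.

Definition preN (m : nat) : G := eval_word a (flatten (map blk (take m (enum 'I_n)))).

Lemma preN0 : preN 0 = one. Proof. by rewrite /preN take0. Qed.

Lemma preNn : eval_word a (relator n) = one -> preN n = one.
Proof. by move=> h; rewrite /preN take_oversize ?size_enum_ord. Qed.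

Lemma filter_enum_lt (i : nat) : (i <= n)%N ->
  [seq k : 'I_n <- enum 'I_n | (k < i)%N] = take i (enum 'I_n).
Proof.
move=> hi; apply: (inj_map val_inj).
rewrite map_take.
have -> : [seq val k | k <- [seq k : 'I_n <- enum 'I_n | (k < i)%N]] = [seq x <- map val (enum 'I_n) | (x < i)%N] by rewrite filter_map.
rewrite val_enum_ord take_iota (minn_idPl hi).
rewrite -(subnKC hi) iotaD filter_cat add0n.
have -> : [seq x <- iota 0 i | (x < i)%N] = iota 0 i.
  by apply/all_filterP/allP => x; rewrite mem_iota.
rewrite (eq_in_filter (a2 := pred0)) ?filter_pred0 ?cats0 // => x.
by rewrite mem_iota /= => /andP[h _]; rewrite ltnNge h.
Qed.

Lemma pre_preN (i : 'I_n) : pre a i = preN i.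
Proof.
rewrite /pre /preN eval_blocks -(filter_enum_lt (ltnW (ltn_ord i))) big_filter.
by rewrite enumT.
Qed.

Lemma preN_succ (j : 'I_n) : mul (mul (preN j) (a j)) (a j) = preN j.+1.
Proof.
rewrite /preN (take_nth j) ?size_enum_ord // -cats1 map_cat flatten_cat eval_cat.
have -> : nth j (enum 'I_n) j = j by apply: val_inj; rewrite /= nth_enum_ord.
by rewrite /= /eval_letter /= mulg1 mulgA.
Qed.

Lemma zg_mul_of (h : G) (r : ZG G) : zg_mul (zg_of h) r = [seq (1 * q.1, mul h q.2) | q <- r].
Proof. by rewrite /zg_mul /= cats0. Qed.

Section FoxS.
Variables (i : 'I_n) (Phi : G -> int).
Definition FS (w : word n) (g : G) := \sum_(q <- fox a i w) q.1 * Phi (mul g q.2).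

Lemma FS_cons l w g : FS (l :: w) g =
  \sum_(q <- fox_letter a i l) q.1 * Phi (mul g q.2) + FS w (mul g (eval_letter a l)).
Proof.
rewrite /FS /= big_cat zg_mul_of big_map; congr (_ + _).
by apply: eq_bigr => q _; rewrite mul1r mulgA.
Qed.

Lemma FS_cat w1 w2 g : FS (w1 ++ w2) g = FS w1 g + FS w2 (mul g (eval_word a w1)).
Proof.
elim: w1 g => [|l w1 IH] g /=; first by rewrite /FS /= big_nil add0r mulg1.
by rewrite !FS_cons IH addrA mulgA.
Qed.

Lemma FS_nil g : FS [::] g = 0. Proof. by rewrite /FS big_nil. Qed.

Lemma FS_blk j g : FS (blk j) g =
  if j == i then Phi (mul g one) + Phi (mul g (mul (a j) one)) else 0.
Proof.
rewrite /blk !FS_cons FS_nil /fox_letter /=.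
case: (j == i); rewrite ?big_nil ?big_cons ?big_nil /= ?addr0 ?mul1r //.
by rewrite /eval_letter /= mulgA.
Qed.

Lemma FS_blocks_notin (s : seq 'I_n) g : i \notin s -> FS (flatten (map blk s)) g = 0.
Proof.
elim: s g => [|j s IH] g; first by rewrite FS_nil.
rewrite in_cons negb_or => /andP[hj hs].
change (FS (blk j ++ flatten (map blk s)) g = 0).
by rewrite FS_cat FS_blk eq_sym (negbTE hj) IH // add0r.
Qed.

Lemma fox_rel : \sum_(q <- fox a i (relator n)) q.1 * Phi q.2 =
  Phi (preN i) + Phi (mul (preN i) (a i)).
Proof.
have -> : \sum_(q <- fox a i (relator n)) q.1 * Phi q.2 = FS (relator n) one.
  by apply: eq_bigr => q _; rewrite mul1g.
have e : enum 'I_n = take i (enum 'I_n) ++ i :: drop i.+1 (enum 'I_n).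
  have hn : nth i (enum 'I_n) i = i by apply: val_inj; rewrite /= nth_enum_ord.
  have := cat_take_drop i (enum 'I_n).
  by rewrite (drop_nth i) ?size_enum_ord // hn => H; symmetry; exact H.
have -> : relator n = flatten (map blk (take i (enum 'I_n))) ++ blk i ++
   flatten (map blk (drop i.+1 (enum 'I_n))).
  by rewrite /relator [in LHS]e map_cat flatten_cat /=.
rewrite !FS_cat FS_blk eqxx !FS_blocks_notin ?add0r ?addr0.
- by rewrite mul1g /= !mulg1.
- rewrite -(mem_map (@ord_inj n)) map_drop val_enum_ord drop_iota mem_iota.
  by apply/negP=> /andP[h _]; move: h; rewrite add0n ltnn.
- rewrite -(mem_map (@ord_inj n)) map_take val_enum_ord take_iota mem_iota.
  by rewrite add0n (minn_idPl (ltnW (ltn_ord i))) ltnn andbF.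
Qed.
End FoxS.
End Grp.



Lemma tele1 (f : nat -> int) m j :
  \sum_(i < m | (i < j)%N) (f i.+1 - f i) = f (minn j m) - f 0%N.
Proof.
elim: m => [|m IH]; first by rewrite big_ord0 minn0 subrr.
rewrite big_mkcond big_ord_recr /= -big_mkcond IH.
case: (boolP (m < j)%N) => h.
  have -> : minn j m = m by lia.
  have -> : minn j m.+1 = m.+1 by lia. ring.
have -> : minn j m = j by lia.
have -> : minn j m.+1 = j by lia. by rewrite addr0.
Qed.

Lemma tele2 (f : nat -> int) m j :
  \sum_(i < m | (j < i)%N) (f i.+1 - f i) = f (maxn m j.+1) - f j.+1.
Proof.
elim: m => [|m IH]; first by rewrite big_ord0 max0n subrr.
rewrite big_mkcond big_ord_recr /= -big_mkcond IH.
case: (boolP (j < m)%N) => h.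
  have -> : maxn m j.+1 = m by lia.
  have -> : maxn m.+1 j.+1 = m.+1 by lia. ring.
have -> : maxn m j.+1 = j.+1 by lia.
have -> : maxn m.+1 j.+1 = j.+1 by lia. by rewrite addr0.
Qed.

Lemma alg n (X1 X2 : nat -> int) (Ya1 Yb1 Z1 Ya2 Yb2 Z2 : 'I_n -> int) :
 X1 0%N * (\sum_(i<n) (Ya2 i + Yb2 i))
 + \sum_(i < n) (\sum_(j < n | (j < i)%N) ((X1 j.+1 - X1 j) * (Ya2 i + Yb2 i)
                                    - (Ya1 j + Yb1 j) * (X2 i.+1 - X2 i))
                 + ((Z1 i - X1 i) * Yb2 i - Ya1 i * (X2 i.+1 - Z2 i)))
 + (\sum_(i<n) (Ya1 i + Yb1 i)) * X2 n
 = \sum_(i<n) (Ya1 i * Z2 i + X1 i * Ya2 i + Yb1 i * X2 i.+1 + Z1 i * Yb2 i).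
Proof.
have e1 : forall i : 'I_n, \sum_(j < n | (j < i)%N) ((X1 j.+1 - X1 j) * (Ya2 i + Yb2 i)
                                    - (Ya1 j + Yb1 j) * (X2 i.+1 - X2 i))
  = (X1 i - X1 0%N) * (Ya2 i + Yb2 i) - \sum_(j < n | (j < i)%N) (Ya1 j + Yb1 j) * (X2 i.+1 - X2 i).
  move=> i; rewrite sumrB -mulr_suml (tele1 (fun k => X1 k)).
  by rewrite (minn_idPl (ltnW (ltn_ord i))).
have e2 : \sum_(i < n) \sum_(j < n | (j < i)%N) (Ya1 j + Yb1 j) * (X2 i.+1 - X2 i)
   = \sum_(j < n) (Ya1 j + Yb1 j) * (X2 n - X2 j.+1).
  rewrite (eq_bigr (fun i : 'I_n => \sum_(j < n) (if (j < i)%N then (Ya1 j + Yb1 j) * (X2 i.+1 - X2 i) else 0))); last by move=> i _; rewrite big_mkcond.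
  rewrite exchange_big /=; apply: eq_bigr => j _.
  rewrite -big_mkcond /= -mulr_sumr (tele2 (fun k => X2 k)).
  by rewrite (maxn_idPl (ltn_ord j)).
rewrite (eq_bigr (fun i : 'I_n => (X1 i - X1 0%N) * (Ya2 i + Yb2 i) + ((Z1 i - X1 i) * Yb2 i - Ya1 i * (X2 i.+1 - Z2 i)) - \sum_(j < n | (j < i)%N) (Ya1 j + Yb1 j) * (X2 i.+1 - X2 i)) (r := index_enum _) (P := xpredT) (F1 := fun i : 'I_n => \sum_(j < n | (j < i)%N) ((X1 j.+1 - X1 j) * (Ya2 i + Yb2 i)
                                    - (Ya1 j + Yb1 j) * (X2 i.+1 - X2 i))
                 + ((Z1 i - X1 i) * Yb2 i - Ya1 i * (X2 i.+1 - Z2 i)))); last first.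
  by move=> i _; rewrite e1; ring.
rewrite sumrB e2 mulr_sumr mulr_suml.
rewrite -sumrB -!big_split /=.
apply: eq_bigr => i _; ring.
Qed.



Section Main.
Variables (G : groupType) (n : nat) (a : 'I_n -> G).
Notation K := (G * gen n)%type.

Lemma coef_dT_cons (p : int * (K * K)) t k :
  coef (dT a (p :: t)) k = p.1 * coef (dT1 a p.2.1 p.2.2) k + coef (dT a t) k.
Proof. by rewrite /dT /= coef_cat coef_fscale. Qed.

Lemma dT_cat (s t : Tel G n) : dT a (s ++ t) = dT a s ++ dT a t.
Proof. by rewrite /dT map_cat flatten_cat. Qed.

Lemma coef_dT_flatten (ss : seq (Tel G n)) k :
  coef (dT a (flatten ss)) k = \sum_(s <- ss) coef (dT a s) k.
Proof.
elim: ss => [|s ss IH]; first by rewrite big_nil /dT /= coef_nil.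
by rewrite /= dT_cat coef_cat IH big_cons.
Qed.

Lemma coef_dT1 (u v : K) k1 k2 :
  coef (dT1 a u v) (k1, k2) = coef (dP1 a u) k1 * ind v k2
     + (-1) ^+ gdeg u.2 * (ind u k1 * coef (dP1 a v) k2).
Proof.
rewrite /dT1 coef_cat !coef_seq !big_map mulr_suml mulr_sumr; congr (_ + _).
  by apply: eq_big_seq => q _ /=; rewrite ind_pair mulrA.
rewrite mulr_sumr; apply: eq_big_seq => q _ /=; rewrite ind_pair; ring.
Qed.

Lemma coef_dP1_X g k : coef (dP1 a (g, GX)) k = 0.
Proof. by rewrite /dP1 /= coef_nil. Qed.

Lemma coef_dP1_Y g j k : coef (dP1 a (g, GY j)) k = ind (mul g (a j), GX) k - ind (g, GX) k.
Proof. rewrite /dP1 /Pact /= !coef_cons coef_nil mulg1; ring. Qed.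

Lemma coef_Pact_Pgen g (r : ZG G) (e : gen n) (k : K) :
  coef (Pact g (Pgen r e)) k = \sum_(q <- r) q.1 * ind (mul g q.2, e) k.
Proof. by rewrite coef_seq /Pact /Pgen -map_comp big_map. Qed.

Lemma coef_dP1_W g k : coef (dP1 a (g, GW)) k =
  \sum_(i < n) (ind (mul g (preN a i), GY i) k + ind (mul g (mul (preN a i) (a i)), GY i) k).
Proof.
rewrite /dP1 /= /Pact map_flatten coef_flatten -map_comp big_map enumT.
apply: eq_bigr => i _ /=.
rewrite -/(Pact g _) coef_Pact_Pgen.
exact: (fox_rel a i (fun h => ind (mul g h, GY i) k)).
Qed.


Lemma Ttens11 (g h : G) (e f : gen n) :
  Ttens (zg_of g) e (zg_of h) f = [:: (1, ((g, e), (h, f)))].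
Proof. by []. Qed.

Lemma Ttens21 (g g' h : G) (e f : gen n) :
  Ttens [:: (1, g); (1, g')] e (zg_of h) f = [:: (1, ((g, e), (h, f))); (1, ((g', e), (h, f)))].
Proof. by []. Qed.

Definition Dm (e : gen n) : Tel G n :=
  match e with
  | GX => Ttens (zg_of one) GX (zg_of one) GX
  | GY i => Ttens (zg_of one) (GY i) (zg_of (a i)) GX ++ Ttens (zg_of one) GX (zg_of one) (GY i)
  | GW => Ttens (zg_of one) GX (zg_of one) GW ++ Delta11w a ++ Ttens (zg_of one) GW (zg_of one) GX
  end.

Lemma coef_extend (s : Pel G n) k :
  coef (extend Dm s) k = \sum_(p <- s) p.1 * coef (Tact p.2.1 (Dm p.2.2)) k.
Proof. by rewrite /extend (coef_lin (fun u : G * gen n => Tact u.1 (Dm u.2))). Qed.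

Lemma coef_TactDY h i k1 k2 : coef (Tact h (Dm (GY i))) (k1, k2) =
  ind (h, GY i) k1 * ind (mul h (a i), GX) k2 + ind (h, GX) k1 * ind (h, GY i) k2.
Proof. by rewrite /Dm /Tact /= !coef_cons coef_nil !ind_pair !mulg1 !mul1r addr0. Qed.

Lemma coef_extend_W k1 k2 : coef (extend Dm (dgen a GW)) (k1, k2) =
  \sum_(i < n) (ind (preN a i, GY i) k1 * ind (mul (preN a i) (a i), GX) k2
              + ind (preN a i, GX) k1 * ind (preN a i, GY i) k2
              + (ind (mul (preN a i) (a i), GY i) k1 * ind (preN a i.+1, GX) k2
              + ind (mul (preN a i) (a i), GX) k1 * ind (mul (preN a i) (a i), GY i) k2)).
Proof.
rewrite coef_extend /= big_flatten big_map enumT; apply: eq_bigr => i _.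
rewrite /Pgen big_map /=.
rewrite (fox_rel a i (fun h => coef (Tact h (Dm (GY i))) (k1, k2))) !coef_TactDY.
by rewrite -preN_succ.
Qed.


Definition Dl (i : 'I_n) : Tel G n :=
    flatten [seq Ttens [:: (1, pre a j); (1, mul (pre a j) (a j))] (GY j)
                       (zg_of (pre a i)) (GY i) | j : 'I_n <- enum 'I_n & (j < i)%N]
    ++ flatten [seq Ttens [:: (1, pre a j); (1, mul (pre a j) (a j))] (GY j)
                       (zg_of (mul (pre a i) (a i))) (GY i) | j : 'I_n <- enum 'I_n & (j < i)%N]
    ++ Ttens (zg_of (pre a i)) (GY i) (zg_of (mul (pre a i) (a i))) (GY i).

Lemma Delta11wE : Delta11w a = flatten [seq Dl i | i <- enum 'I_n].
Proof. by []. Qed.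

Definition X_ (k : K) (m : nat) := ind (preN a m, GX) k.
Definition Ya_ (k : K) (i : 'I_n) := ind (preN a i, GY i) k.
Definition Yb_ (k : K) (i : 'I_n) := ind (mul (preN a i) (a i), GY i) k.
Definition Z_ (k : K) (i : 'I_n) := ind (mul (preN a i) (a i), GX) k.

Lemma dT_nil : dT a [::] = [::]. Proof. by []. Qed.

Lemma coef_dT_Dl i k1 k2 : coef (dT a (Dl i)) (k1, k2) =
  \sum_(j < n | (j < i)%N) ((X_ k1 j.+1 - X_ k1 j) * (Ya_ k2 i + Yb_ k2 i)
                          - (Ya_ k1 j + Yb_ k1 j) * (X_ k2 i.+1 - X_ k2 i))
  + ((Z_ k1 i - X_ k1 i) * Yb_ k2 i - Ya_ k1 i * (X_ k2 i.+1 - Z_ k2 i)).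
Proof.
rewrite /Dl !dT_cat !coef_cat !coef_dT_flatten !big_map !big_filter enumT addrA -big_split /=.
congr (_ + _).
  apply: eq_bigr => j _.
  rewrite !Ttens21 !coef_dT_cons dT_nil !coef_nil !coef_dT1 !coef_dP1_Y /= !pre_preN !preN_succ.
  rewrite /X_ /Ya_ /Yb_ /Z_ expr1; ring.
rewrite !coef_cons !coef_nil !ind_pair !mulg1 !pre_preN !preN_succ.
rewrite /X_ /Ya_ /Yb_ /Z_ expr1; ring.
Qed.


Lemma coef_dT_W (hrel : eval_word a (relator n) = one) k1 k2 :
 coef (dT a (Dm GW)) (k1, k2) =
 X_ k1 0%N * (\sum_(i<n) (Ya_ k2 i + Yb_ k2 i))
 + \sum_(i < n) (\sum_(j < n | (j < i)%N) ((X_ k1 j.+1 - X_ k1 j) * (Ya_ k2 i + Yb_ k2 i)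
                                    - (Ya_ k1 j + Yb_ k1 j) * (X_ k2 i.+1 - X_ k2 i))
                 + ((Z_ k1 i - X_ k1 i) * Yb_ k2 i - Ya_ k1 i * (X_ k2 i.+1 - Z_ k2 i)))
 + (\sum_(i<n) (Ya_ k1 i + Yb_ k1 i)) * X_ k2 n.
Proof.
rewrite /Dm !dT_cat !coef_cat Delta11wE coef_dT_flatten big_map enumT addrA.
congr (_ + _ + _).
  rewrite coef_fscale coef_dT1 /= coef_dP1_X coef_dP1_W !coef_nil.
  rewrite expr0 mul0r !add0r !mul1r !addr0.
  rewrite /X_ preN0; congr (_ * _); apply: eq_bigr => i _.
  by rewrite /Ya_ /Yb_ !mul1g.
- by apply: eq_bigr => i _; rewrite coef_dT_Dl.
- rewrite coef_fscale coef_dT1 /= coef_dP1_X coef_dP1_W !coef_nil.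
  rewrite mulr0 mulr0 !addr0 !mul1r.
  rewrite /X_ (preNn hrel); congr (_ * _); apply: eq_bigr => i _.
  by rewrite /Ya_ /Yb_ !mul1g.
Qed.

Lemma homog_all m (t : Tel G n) :
  all (fun p => gdeg p.2.1.2 + gdeg p.2.2.2 == m)%N t -> homog m t.
Proof.
move=> hall k hk.
case: (boolP (has (fun p => p.2 == k) t)) => [/hasP[p pt /eqP <-]|hn].
  by have /eqP := allP hall p pt.
move: hk; rewrite coef_seq big1_seq ?eqxx // => p /andP[_ pt].
by rewrite /ind (negbTE (hasPn hn p pt)) mulr0.
Qed.

Lemma Delta11_deg : all (fun p => (gdeg p.2.1.2 == 1) && (gdeg p.2.2.2 == 1))%N (Delta11w a).
Proof.
rewrite Delta11wE; apply/allP => p /flattenP [s /mapP [i _ ->]].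
rewrite /Dl !mem_cat => /orP[|/orP[]].
- by move=> /flattenP [s' /mapP [j _ ->]]; rewrite Ttens21 !inE => /orP[]/eqP->.
- by move=> /flattenP [s' /mapP [j _ ->]]; rewrite Ttens21 !inE => /orP[]/eqP->.
- by rewrite ?Ttens11 !inE orbF => /eqP->.
Qed.

End Main.


Unset Implicit Arguments.
Set Strict Implicit.
Set Printing Implicit Defensive.

Theorem mainTheorem4 (n : nat) (G : groupType) (a : 'I_n -> G) :
  (2 <= n)%N ->
  is_presented a (relator n) ->
  exists D : gen n -> Tel G n,
    [/\ diag_approx a D,
        feq (D GX) (Ttens (zg_of one) GX (zg_of one) GX),
        (forall i : 'I_n,
          feq (D (GY i)) (Ttens (zg_of one) (GY i) (zg_of (a i)) GX
                          ++ Ttens (zg_of one) GX (zg_of one) (GY i))),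
        feq (proj 0 2 (D GW)) (Ttens (zg_of one) GX (zg_of one) GW) &
        feq (proj 1 1 (D GW)) (Delta11w a)].
Proof.
move=> _ [hrel _]; exists (Dm a); split.
- split.
  + move=> e; apply: homog_all; case: e => [|i|] //.
    rewrite /Dm !all_cat /= ?andbT; apply/allP => p /(allP (Delta11_deg a)).
    by case/andP => /eqP -> /eqP ->.
  + case => [|i|] [k1 k2].
    * by [].
    * rewrite /Dm /= !coef_cons !coef_nil /= !ind_pair !mulg1 !mul1g.
      ring.
    * rewrite coef_dT_W // coef_extend_W.
      rewrite (alg (X_ a k1) (X_ a k2) (Ya_ a k1) (Yb_ a k1) (Z_ a k1) (Ya_ a k2) (Yb_ a k2) (Z_ a k2)).
      apply: eq_bigr => i _; rewrite /X_ /Ya_ /Yb_ /Z_; ring.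
  + by rewrite /epsT /= big_cons big_nil.
- by [].
- by [].
- have h0 : [seq p <- Delta11w a | (gdeg p.2.1.2 == 0%N) && (gdeg p.2.2.2 == 2%N)] = [::].
    rewrite -[RHS](filter_pred0 (Delta11w a)); apply: eq_in_filter.
    by move=> p /(allP (Delta11_deg a)) /andP[/eqP -> /eqP ->].
  by rewrite /Dm /proj !filter_cat h0 /= => k.
- rewrite /Dm /proj !filter_cat (all_filterP (Delta11_deg a)) /=.
  by rewrite cats0 => k.
Qed.
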